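(* Let $\alpha,\beta$ be real constants with $\alpha\beta^2-4\alpha^2\neq 0$, and let $\Omega\subseteq\mathbb{R}^2$ be a domain. Let $A,B,E,F,G:\Omega\to\mathbb{C}(\alpha,\beta)$ be continuously differentiable functions and let $C,D:\Omega\to\mathbb{C}(\alpha,\beta)$ be arbitrary functions. Define the operator $$\mathbf{L}w := A\,\partial_z w + B\,\overline{\partial_z w} + C\,\partial_{\bar z} w + D\,\overline{\partial_{\bar z} w} + E\,w + F\,\overline{w} + G,$$ acting on twice continuously differentiable functions $w:\Omega\to\mathbb{C}(\alpha,\beta)$ (all products taken in $\mathbb{C}(\alpha,\beta)$). Then $\mathbf{L}$ is associated to the Cauchy–Riemann operator $\partial_{\bar z}$ (i.e. $\partial_{\bar z}w=0$ implies $\partial_{\bar z}(\mathbf{L}w)=0$) if and only if $B\equiv 0$, $F\equiv 0$, and $A$, $E$, $G$ are holomorphic in $\Omega$ (i.e. $\partial_{\bar z}A=\partial_{\bar z}E=\partial_{\bar z}G=0$).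
   Context: For real parameters $\alpha,\beta$, $\mathbb{C}(\alpha,\beta)$ denotes the real algebra of numbers $z=x+iy$ ($x,y\in\mathbb{R}$) with $i^2=-\alpha-\beta i$ (structure polynomial $X^2+\beta X+\alpha$); thus $(x_1+iy_1)(x_2+iy_2)=(x_1x_2-\alpha y_1y_2)+i(x_1y_2+x_2y_1-\beta y_1y_2)$, which is commutative and associative. Conjugation is $\overline{x+iy}=x-iy$. For a differentiable function $w=u+iv$ of $(x,y)$ with real $u,v$, the Cauchy–Riemann operator is $\partial_{\bar z}=\tfrac12(\partial_x+i\partial_y)$ and its conjugate is $\partial_z=\tfrac12(\partial_x-i\partial_y)$ (multiplication by $i$ in $\mathbb{C}(\alpha,\beta)$). A function $w$ is holomorphic if $\partial_{\bar z}w=0$, equivalently $\partial_xu-\alpha\partial_yv=0$ and $\partial_yu+\partial_xv-\beta\partial_yv=0$. Two differential operators $\mathbf{L},\mathbf{G}$ are called associated if $\mathbf{G}w=0$ implies $\mathbf{G}(\mathbf{L}w)=0$. *)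

(* Defs.v *)
From Stdlib Require Import Reals.
From Coquelicot Require Import Coquelicot.
Open Scope R_scope.

(* Elements of C(alpha,beta): x + i y represented as the pair (x, y). *)
Definition alg := (R * R)%type.

(* Product in C(alpha,beta): i^2 = -alpha - beta i. *)
Definition cmul (alpha beta : R) (z1 z2 : alg) : alg :=
  (fst z1 * fst z2 - alpha * snd z1 * snd z2,
   fst z1 * snd z2 + fst z2 * snd z1 - beta * snd z1 * snd z2).

Definition cadd (z1 z2 : alg) : alg := (fst z1 + fst z2, snd z1 + snd z2).
Definition cconj (z : alg) : alg := (fst z, - snd z).
Definition cI : alg := (0, 1).
Definition cscal (r : R) (z : alg) : alg := (r * fst z, r * snd z).

Definition pdx (g : R -> R -> R) (x y : R) : R := Derive (fun t => g t y) x.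
Definition pdy (g : R -> R -> R) (x y : R) : R := Derive (fun t => g x t) y.

Definition Dx (f : R -> R -> alg) (x y : R) : alg :=
  (pdx (fun a b => fst (f a b)) x y, pdx (fun a b => snd (f a b)) x y).
Definition Dy (f : R -> R -> alg) (x y : R) : alg :=
  (pdy (fun a b => fst (f a b)) x y, pdy (fun a b => snd (f a b)) x y).

Definition dzb (alpha beta : R) (f : R -> R -> alg) (x y : R) : alg :=
  cscal (1/2) (cadd (Dx f x y) (cmul alpha beta cI (Dy f x y))).
Definition dz (alpha beta : R) (f : R -> R -> alg) (x y : R) : alg :=
  cscal (1/2) (cadd (Dx f x y) (cscal (-1) (cmul alpha beta cI (Dy f x y)))).

Definition open2 (U : R -> R -> Prop) : Prop :=
  forall x y, U x y -> exists eps, 0 < eps /\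
    forall x' y', Rabs (x' - x) < eps -> Rabs (y' - y) < eps -> U x' y'.

Definition connected2 (O : R -> R -> Prop) : Prop :=
  forall U V : R -> R -> Prop, open2 U -> open2 V ->
    (forall x y, O x y -> U x y \/ V x y) ->
    (forall x y, O x y -> ~ (U x y /\ V x y)) ->
    (exists x y, O x y /\ U x y) -> (exists x y, O x y /\ V x y) -> False.

Definition is_domain (O : R -> R -> Prop) : Prop :=
  (exists x y, O x y) /\ open2 O /\ connected2 O.

Definition C1r (O : R -> R -> Prop) (g : R -> R -> R) : Prop :=
  forall x y, O x y ->
    ex_derive (fun t => g t y) x /\ ex_derive (fun t => g x t) y /\
    continuity_2d_pt (pdx g) x y /\ continuity_2d_pt (pdy g) x y.

Definition C2r (O : R -> R -> Prop) (g : R -> R -> R) : Prop :=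
  C1r O g /\ C1r O (pdx g) /\ C1r O (pdy g).

Definition C1on (O : R -> R -> Prop) (f : R -> R -> alg) : Prop :=
  C1r O (fun a b => fst (f a b)) /\ C1r O (fun a b => snd (f a b)).
Definition C2on (O : R -> R -> Prop) (f : R -> R -> alg) : Prop :=
  C2r O (fun a b => fst (f a b)) /\ C2r O (fun a b => snd (f a b)).

Definition Lop (alpha beta : R) (A B C D E F G : R -> R -> alg)
  (w : R -> R -> alg) (x y : R) : alg :=
  let m := cmul alpha beta in
  cadd (m (A x y) (dz alpha beta w x y))
  (cadd (m (B x y) (cconj (dz alpha beta w x y)))
  (cadd (m (C x y) (dzb alpha beta w x y))
  (cadd (m (D x y) (cconj (dzb alpha beta w x y)))
  (cadd (m (E x y) (w x y))
  (cadd (m (F x y) (cconj (w x y))) (G x y)))))).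

Definition holo (alpha beta : R) (O : R -> R -> Prop) (f : R -> R -> alg) : Prop :=
  forall x y, O x y -> dzb alpha beta f x y = (0, 0).

Definition associated_dzb (alpha beta : R) (O : R -> R -> Prop)
  (L : (R -> R -> alg) -> R -> R -> alg) : Prop :=
  forall w, C2on O w -> holo alpha beta O w -> holo alpha beta O (L w).

(* Main.v *)
Require Import Defs.
From Stdlib Require Import Reals Lra FunctionalExtensionality.
From Coquelicot Require Import Coquelicot.
Require Import Defs.
Open Scope R_scope.

Definition exd (f : R -> R -> alg) x y :=
  ex_derive (fun t => fst (f t y)) x /\ ex_derive (fun t => snd (f t y)) x /\
  ex_derive (fun t => fst (f x t)) y /\ ex_derive (fun t => snd (f x t)) y.

Ltac pe := apply injective_projections; simpl; ring.

Ltac setD := do 16 try (match goal with |- context [Derive ?f ?x] => let a := fresh "dd" in set (a := Derive f x) end).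
Ltac rr := cbv beta; setD; ring.

Lemma gm1 (u1 u2 v1 v2 : R -> R) al x : ex_derive u1 x -> ex_derive u2 x ->
  ex_derive v1 x -> ex_derive v2 x ->
  Derive (fun t => u1 t * v1 t - al * u2 t * v2 t) x =
  Derive u1 x * v1 x - al * Derive u2 x * v2 x + (u1 x * Derive v1 x - al * u2 x * Derive v2 x).
Proof. intros. apply is_derive_unique. auto_derive. repeat split; auto. rr. Qed.
Lemma gm2 (u1 u2 v1 v2 : R -> R) be x : ex_derive u1 x -> ex_derive u2 x ->
  ex_derive v1 x -> ex_derive v2 x ->
  Derive (fun t => u1 t * v2 t + v1 t * u2 t - be * u2 t * v2 t) x =
  Derive u1 x * v2 x + v1 x * Derive u2 x - be * Derive u2 x * v2 x +
  (u1 x * Derive v2 x + Derive v1 x * u2 x - be * u2 x * Derive v2 x).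
Proof. intros. apply is_derive_unique. auto_derive. repeat split; auto. rr. Qed.
Lemma ga (u v : R -> R) x : ex_derive u x -> ex_derive v x ->
  Derive (fun t => u t + v t) x = Derive u x + Derive v x.
Proof. intros. apply is_derive_unique. auto_derive. repeat split; auto. rr. Qed.
Lemma em1 (u1 u2 v1 v2 : R -> R) al x : ex_derive u1 x -> ex_derive u2 x ->
  ex_derive v1 x -> ex_derive v2 x ->
  ex_derive (fun t => u1 t * v1 t - al * u2 t * v2 t) x.
Proof. intros. auto_derive. repeat split; auto. Qed.
Lemma em2 (u1 u2 v1 v2 : R -> R) be x : ex_derive u1 x -> ex_derive u2 x ->
  ex_derive v1 x -> ex_derive v2 x ->
  ex_derive (fun t => u1 t * v2 t + v1 t * u2 t - be * u2 t * v2 t) x.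
Proof. intros. auto_derive. repeat split; auto. Qed.
Lemma ea (u v : R -> R) x : ex_derive u x -> ex_derive v x ->
  ex_derive (fun t => u t + v t) x.
Proof. intros. auto_derive. repeat split; auto. Qed.
Lemma eo (u : R -> R) x : ex_derive u x -> ex_derive (fun t => - u t) x.
Proof. intros. auto_derive. repeat split; auto. Qed.

Lemma Dx_mul al be f g x y : exd f x y -> exd g x y ->
  Dx (fun a b => cmul al be (f a b) (g a b)) x y =
  cadd (cmul al be (Dx f x y) (g x y)) (cmul al be (f x y) (Dx g x y)).
Proof.
intros (H1&H2&H3&H4) (K1&K2&K3&K4). unfold Dx, pdx, cmul, cadd; simpl.
f_equal; first [rewrite gm1 | rewrite gm2 | rewrite ga]; auto.
Qed.

Lemma Dy_mul al be f g x y : exd f x y -> exd g x y ->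
  Dy (fun a b => cmul al be (f a b) (g a b)) x y =
  cadd (cmul al be (Dy f x y) (g x y)) (cmul al be (f x y) (Dy g x y)).
Proof.
intros (H1&H2&H3&H4) (K1&K2&K3&K4). unfold Dy, pdy, cmul, cadd; simpl.
f_equal; first [rewrite gm1 | rewrite gm2 | rewrite ga]; auto.
Qed.

Lemma Dx_add f g x y : exd f x y -> exd g x y ->
  Dx (fun a b => cadd (f a b) (g a b)) x y = cadd (Dx f x y) (Dx g x y).
Proof.
intros (H1&H2&H3&H4) (K1&K2&K3&K4). unfold Dx, pdx, cadd; simpl.
f_equal; first [rewrite gm1 | rewrite gm2 | rewrite ga]; auto.
Qed.

Lemma Dy_add f g x y : exd f x y -> exd g x y ->
  Dy (fun a b => cadd (f a b) (g a b)) x y = cadd (Dy f x y) (Dy g x y).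
Proof.
intros (H1&H2&H3&H4) (K1&K2&K3&K4). unfold Dy, pdy, cadd; simpl.
f_equal; first [rewrite gm1 | rewrite gm2 | rewrite ga]; auto.
Qed.

Lemma Dx_conj f x y : Dx (fun a b => cconj (f a b)) x y = cconj (Dx f x y).
Proof. unfold Dx, pdx, cconj; simpl. f_equal. apply Derive_opp. Qed.
Lemma Dy_conj f x y : Dy (fun a b => cconj (f a b)) x y = cconj (Dy f x y).
Proof. unfold Dy, pdy, cconj; simpl. f_equal. apply Derive_opp. Qed.

Lemma ex2_mul al be f g x y : exd f x y -> exd g x y ->
  exd (fun a b => cmul al be (f a b) (g a b)) x y.
Proof.
intros (H1&H2&H3&H4) (K1&K2&K3&K4). unfold exd, cmul; simpl.
repeat split.
exact (em1 _ _ _ _ al x H1 H2 K1 K2). exact (em2 _ _ _ _ be x H1 H2 K1 K2).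
exact (em1 _ _ _ _ al y H3 H4 K3 K4). exact (em2 _ _ _ _ be y H3 H4 K3 K4).
Qed.
Lemma ex2_add f g x y : exd f x y -> exd g x y ->
  exd (fun a b => cadd (f a b) (g a b)) x y.
Proof.
intros (H1&H2&H3&H4) (K1&K2&K3&K4). unfold exd, cadd; simpl.
repeat split.
exact (ea _ _ x H1 K1). exact (ea _ _ x H2 K2). exact (ea _ _ y H3 K3). exact (ea _ _ y H4 K4).
Qed.
Lemma ex2_conj f x y : exd f x y -> exd (fun a b => cconj (f a b)) x y.
Proof.
intros (H1&H2&H3&H4). unfold exd, cconj; simpl.
repeat split; auto; apply eo; auto.
Qed.

Lemma dzb_mul al be f g x y : exd f x y -> exd g x y ->
  dzb al be (fun a b => cmul al be (f a b) (g a b)) x y =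
  cadd (cmul al be (dzb al be f x y) (g x y)) (cmul al be (f x y) (dzb al be g x y)).
Proof.
intros Hf Hg. unfold dzb. rewrite Dx_mul, Dy_mul by auto.
unfold cscal, cadd, cmul, cI; pe.
Qed.

Lemma dzb_add al be f g x y : exd f x y -> exd g x y ->
  dzb al be (fun a b => cadd (f a b) (g a b)) x y =
  cadd (dzb al be f x y) (dzb al be g x y).
Proof.
intros Hf Hg. unfold dzb. rewrite Dx_add, Dy_add by auto.
unfold cscal, cadd, cmul, cI; pe.
Qed.

Lemma dzb_conj al be f x y :
  dzb al be (fun a b => cconj (f a b)) x y =
  cscal (1/2) (cadd (cconj (Dx f x y)) (cmul al be cI (cconj (Dy f x y)))).
Proof. unfold dzb. rewrite Dx_conj, Dy_conj. reflexivity. Qed.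

Lemma Dx_loc f g x y : locally_2d (fun a b => f a b = g a b) x y ->
  Dx f x y = Dx g x y.
Proof.
intro H. unfold Dx, pdx. f_equal; apply Derive_ext_loc;
apply locally_2d_1d_const_y in H; revert H; apply filter_imp; intros t Ht; now rewrite Ht.
Qed.
Lemma Dy_loc f g x y : locally_2d (fun a b => f a b = g a b) x y ->
  Dy f x y = Dy g x y.
Proof.
intro H. unfold Dy, pdy. f_equal; apply Derive_ext_loc;
apply locally_2d_1d_const_x in H; revert H; apply filter_imp; intros t Ht; now rewrite Ht.
Qed.
Lemma dzb_loc al be f g x y : locally_2d (fun a b => f a b = g a b) x y ->
  dzb al be f x y = dzb al be g x y.
Proof. intro H. unfold dzb. now rewrite (Dx_loc _ _ _ _ H), (Dy_loc _ _ _ _ H). Qed.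

Lemma open_loc O x y : open2 O -> O x y -> locally_2d O x y.
Proof.
intros HO H. destruct (HO x y H) as (e & He & Hu).
exists (mkposreal e He). simpl. auto.
Qed.
Lemma Dx_scal r f x y : Dx (fun a b => cscal r (f a b)) x y = cscal r (Dx f x y).
Proof. unfold Dx, pdx, cscal; simpl. f_equal; apply Derive_scal. Qed.
Lemma Dy_scal r f x y : Dy (fun a b => cscal r (f a b)) x y = cscal r (Dy f x y).
Proof. unfold Dy, pdy, cscal; simpl. f_equal; apply Derive_scal. Qed.
Lemma exd_scal r f x y : exd f x y -> exd (fun a b => cscal r (f a b)) x y.
Proof.
intros (H1&H2&H3&H4). unfold exd, cscal; simpl.
repeat split; apply ex_derive_scal; auto.
Qed.
Lemma exd_const (c : alg) x y : exd (fun _ _ => c) x y.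
Proof. repeat split; apply ex_derive_const. Qed.
Lemma Dx_const (c : alg) x y : Dx (fun _ _ => c) x y = (0,0).
Proof. unfold Dx, pdx. simpl. now rewrite !Derive_const. Qed.
Lemma Dy_const (c : alg) x y : Dy (fun _ _ => c) x y = (0,0).
Proof. unfold Dy, pdy. simpl. now rewrite !Derive_const. Qed.
Lemma Dx_cmulc al be c f x y : exd f x y ->
  Dx (fun a b => cmul al be c (f a b)) x y = cmul al be c (Dx f x y).
Proof.
intro H. rewrite (Dx_mul al be (fun _ _ => c) f) by (auto; apply exd_const).
rewrite Dx_const. unfold cadd, cmul; pe.
Qed.
Lemma Dy_cmulc al be c f x y : exd f x y ->
  Dy (fun a b => cmul al be c (f a b)) x y = cmul al be c (Dy f x y).
Proof.
intro H. rewrite (Dy_mul al be (fun _ _ => c) f) by (auto; apply exd_const).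
rewrite Dy_const. unfold cadd, cmul; pe.
Qed.

Lemma exd_dz al be w x y : exd (Dx w) x y -> exd (Dy w) x y -> exd (dz al be w) x y.
Proof.
intros H1 H2. change (exd (fun a b => cscal (1/2) (cadd (Dx w a b)
   (cscal (-1) (cmul al be cI (Dy w a b))))) x y).
apply exd_scal, ex2_add; auto. apply exd_scal, ex2_mul; auto. apply exd_const.
Qed.

Lemma Dx_dz al be w x y : exd (Dx w) x y -> exd (Dy w) x y ->
  Dx (dz al be w) x y = cscal (1/2) (cadd (Dx (Dx w) x y)
     (cscal (-1) (cmul al be cI (Dx (Dy w) x y)))).
Proof.
intros H1 H2. change (Dx (fun a b => cscal (1/2) (cadd (Dx w a b)
   (cscal (-1) (cmul al be cI (Dy w a b))))) x y = cscal (1/2) (cadd (Dx (Dx w) x y)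
     (cscal (-1) (cmul al be cI (Dx (Dy w) x y))))).
rewrite Dx_scal, Dx_add; auto.
- rewrite Dx_scal, Dx_cmulc; auto.
- apply exd_scal, ex2_mul; auto. apply exd_const.
Qed.
Lemma Dy_dz al be w x y : exd (Dx w) x y -> exd (Dy w) x y ->
  Dy (dz al be w) x y = cscal (1/2) (cadd (Dy (Dx w) x y)
     (cscal (-1) (cmul al be cI (Dy (Dy w) x y)))).
Proof.
intros H1 H2. change (Dy (fun a b => cscal (1/2) (cadd (Dx w a b)
   (cscal (-1) (cmul al be cI (Dy w a b))))) x y = cscal (1/2) (cadd (Dy (Dx w) x y)
     (cscal (-1) (cmul al be cI (Dy (Dy w) x y))))).
rewrite Dy_scal, Dy_add; auto.
- rewrite Dy_scal, Dy_cmulc; auto.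
- apply exd_scal, ex2_mul; auto. apply exd_const.
Qed.
Lemma C1_exd O f x y : C1on O f -> O x y -> exd f x y.
Proof.
intros [H1 H2] H. destruct (H1 x y H) as (a1&a2&_). destruct (H2 x y H) as (b1&b2&_).
repeat split; auto.
Qed.
Lemma C2_exd O w x y : C2on O w -> O x y -> exd w x y.
Proof.
intros [[H1 _] [H2 _]] H. destruct (H1 x y H) as (a1&a2&_). destruct (H2 x y H) as (b1&b2&_).
repeat split; auto.
Qed.
Lemma C2_exdx O w x y : C2on O w -> O x y -> exd (Dx w) x y.
Proof.
intros [[_ [H1 _]] [_ [H2 _]]] H. destruct (H1 x y H) as (a1&a2&_). destruct (H2 x y H) as (b1&b2&_).
repeat split; auto.
Qed.
Lemma C2_exdy O w x y : C2on O w -> O x y -> exd (Dy w) x y.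
Proof.
intros [[_ [_ H1]] [_ [_ H2]]] H. destruct (H1 x y H) as (a1&a2&_). destruct (H2 x y H) as (b1&b2&_).
repeat split; auto.
Qed.

Lemma schwarz_r O g x y : open2 O -> O x y -> C2r O g ->
  pdx (pdy g) x y = pdy (pdx g) x y.
Proof.
intros HO H [H1 [H2 H3]]. unfold pdx, pdy.
apply Schwarz.
- apply locally_2d_impl with (2 := open_loc O x y HO H).
  apply locally_2d_forall. intros u v Huv.
  destruct (H1 u v Huv) as (a1&a2&_). destruct (H2 u v Huv) as (b1&b2&_).
  destruct (H3 u v Huv) as (c1&c2&_). repeat split; auto.
- destruct (H3 x y H) as (_&_&c&_). exact c.
- destruct (H2 x y H) as (_&_&_&c). exact c.
Qed.

Lemma schwarz O w x y : open2 O -> O x y -> C2on O w ->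
  Dx (Dy w) x y = Dy (Dx w) x y.
Proof.
intros HO H [H1 H2]. unfold Dx, Dy. simpl.
f_equal; apply (schwarz_r O); auto.
Qed.

Lemma Dx_zero O f x y : open2 O -> O x y -> (forall a b, O a b -> f a b = (0,0)) ->
  Dx f x y = (0,0).
Proof.
intros HO H Hf. rewrite (Dx_loc f (fun _ _ => (0,0))). apply Dx_const.
apply locally_2d_impl with (2 := open_loc O x y HO H).
apply locally_2d_forall. auto.
Qed.
Lemma Dy_zero O f x y : open2 O -> O x y -> (forall a b, O a b -> f a b = (0,0)) ->
  Dy f x y = (0,0).
Proof.
intros HO H Hf. rewrite (Dy_loc f (fun _ _ => (0,0))). apply Dy_const.
apply locally_2d_impl with (2 := open_loc O x y HO H).
apply locally_2d_forall. auto.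
Qed.
Lemma dzb_zero al be O f x y : open2 O -> O x y -> (forall a b, O a b -> f a b = (0,0)) ->
  dzb al be f x y = (0,0).
Proof.
intros HO H Hf. unfold dzb. rewrite (Dx_zero O), (Dy_zero O); auto.
unfold cscal, cadd, cmul; pe.
Qed.
Lemma alg1 al be (XX XY YX YY : alg) :
  cscal (1/2) (cadd XX (cmul al be cI XY)) = (0,0) ->
  cscal (1/2) (cadd YX (cmul al be cI YY)) = (0,0) ->
  XY = YX ->
  cscal (1/2) (cadd (cscal (1/2) (cadd XX (cscal (-1) (cmul al be cI XY))))
     (cmul al be cI (cscal (1/2) (cadd YX (cscal (-1) (cmul al be cI YY)))))) = (0,0).
Proof.
destruct XX as [a1 a2], XY as [b1 b2], YX as [c1 c2], YY as [d1 d2].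
unfold cscal, cadd, cmul, cI; simpl. intros H1 H2 H3.
injection H1; injection H2; injection H3; intros.
subst b1 b2.
assert (a1 = al * c2) by lra. assert (a2 = - c1 + be * c2) by lra.
assert (c1 = al * d2) by lra. assert (c2 = - d1 + be * d2) by lra.
subst. f_equal; ring.
Qed.

Lemma dzb_dz_zero al be O w x y : open2 O -> O x y -> C2on O w -> holo al be O w ->
  dzb al be (dz al be w) x y = (0,0).
Proof.
intros HO H HC Hh.
assert (ex1 := C2_exdx O w x y HC H). assert (ey := C2_exdy O w x y HC H).
assert (K1 : Dx (dzb al be w) x y = (0,0)) by (apply (Dx_zero O); auto).
assert (K2 : Dy (dzb al be w) x y = (0,0)) by (apply (Dy_zero O); auto).
change (Dx (fun a b => cscal (1/2) (cadd (Dx w a b) (cmul al be cI (Dy w a b)))) x y = (0,0)) in K1.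
change (Dy (fun a b => cscal (1/2) (cadd (Dx w a b) (cmul al be cI (Dy w a b)))) x y = (0,0)) in K2.
rewrite Dx_scal, Dx_add, Dx_cmulc in K1; auto.
2:{ apply ex2_mul; auto. apply exd_const. }
rewrite Dy_scal, Dy_add, Dy_cmulc in K2; auto.
2:{ apply ex2_mul; auto. apply exd_const. }
unfold dzb at 1. rewrite Dx_dz, Dy_dz by auto.
apply alg1; auto. apply (schwarz O); auto.
Qed.
Ltac pe2 := unfold cadd, cmul, cconj, cscal, cI; apply injective_projections; cbn [fst snd]; first [ring | field].

Lemma KL al be O A B C D E F G w x y : open2 O -> O x y ->
  C1on O A -> C1on O B -> C1on O E -> C1on O F -> C1on O G ->
  C2on O w -> holo al be O w ->
  dzb al be (Lop al be A B C D E F G w) x y =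
  cadd (cmul al be (dzb al be A x y) (dz al be w x y))
  (cadd (cmul al be (dzb al be B x y) (cconj (dz al be w x y)))
  (cadd (cmul al be (B x y) (dzb al be (fun a b => cconj (dz al be w a b)) x y))
  (cadd (cmul al be (dzb al be E x y) (w x y))
  (cadd (cmul al be (dzb al be F x y) (cconj (w x y)))
  (cadd (cmul al be (F x y) (dzb al be (fun a b => cconj (w a b)) x y))
   (dzb al be G x y)))))).
Proof.
intros HO H hA hB hE hF hG hw Hh.
rewrite (dzb_loc al be _ (fun a b =>
  cadd (cmul al be (A a b) (dz al be w a b))
  (cadd (cmul al be (B a b) (cconj (dz al be w a b)))
  (cadd (cmul al be (E a b) (w a b))
  (cadd (cmul al be (F a b) (cconj (w a b))) (G a b)))))).
2:{ apply locally_2d_impl with (2 := open_loc O x y HO H).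
    apply locally_2d_forall. intros a b Hab.
    unfold Lop. rewrite (Hh a b Hab). pe2. }
assert (eA := C1_exd O A x y hA H). assert (eB := C1_exd O B x y hB H).
assert (eE := C1_exd O E x y hE H). assert (eF := C1_exd O F x y hF H).
assert (eG := C1_exd O G x y hG H). assert (ew := C2_exd O w x y hw H).
assert (eu : exd (dz al be w) x y).
{ apply exd_dz. apply (C2_exdx O); auto. apply (C2_exdy O); auto. }
assert (Z1 := dzb_dz_zero al be O w x y HO H hw Hh).
assert (Z2 := Hh x y H).
assert (e1 := ex2_mul al be _ _ x y eA eu).
assert (e2 := ex2_mul al be _ _ x y eB (ex2_conj _ x y eu)).
assert (e3 := ex2_mul al be _ _ x y eE ew).
assert (e4 := ex2_mul al be _ _ x y eF (ex2_conj _ x y ew)).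
assert (e5 := ex2_add _ _ x y e4 eG).
assert (e6 := ex2_add _ _ x y e3 e5).
assert (e7 := ex2_add _ _ x y e2 e6).
rewrite (dzb_add al be _ _ x y e1 e7).
rewrite (dzb_add al be _ _ x y e2 e6).
rewrite (dzb_add al be _ _ x y e3 e5).
rewrite (dzb_add al be _ _ x y e4 eG).
rewrite (dzb_mul al be _ _ x y eA eu).
rewrite (dzb_mul al be _ _ x y eB (ex2_conj _ x y eu)).
rewrite (dzb_mul al be _ _ x y eE ew).
rewrite (dzb_mul al be _ _ x y eF (ex2_conj _ x y ew)).
change (dzb al be (fun a b => dz al be w a b) x y) with (dzb al be (dz al be w) x y).
change (dzb al be (fun a b => w a b) x y) with (dzb al be w x y).
rewrite Z1, Z2.
change (dzb al be (fun a b => A a b) x y) with (dzb al be A x y).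
change (dzb al be (fun a b => B a b) x y) with (dzb al be B x y).
change (dzb al be (fun a b => E a b) x y) with (dzb al be E x y).
change (dzb al be (fun a b => F a b) x y) with (dzb al be F x y).
change (dzb al be (fun a b => G a b) x y) with (dzb al be G x y).
pe2.
Qed.
Definition qd (c0 cx cy cxx cxy cyy x0 y0 a b : R) : R :=
  c0 + cx * (a - x0) + cy * (b - y0) + cxx * ((a - x0) * (a - x0))
  + cxy * ((a - x0) * (b - y0)) + cyy * ((b - y0) * (b - y0)).

Lemma pdx_qd c0 cx cy cxx cxy cyy x0 y0 :
  pdx (fun a b => qd c0 cx cy cxx cxy cyy x0 y0 a b) =
  (fun a b => qd cx (2*cxx) cxy 0 0 0 x0 y0 a b).
Proof.
apply functional_extensionality; intro a; apply functional_extensionality; intro b.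
unfold pdx. apply is_derive_unique. unfold qd. auto_derive; auto. ring.
Qed.
Lemma pdy_qd c0 cx cy cxx cxy cyy x0 y0 :
  pdy (fun a b => qd c0 cx cy cxx cxy cyy x0 y0 a b) =
  (fun a b => qd cy cxy (2*cyy) 0 0 0 x0 y0 a b).
Proof.
apply functional_extensionality; intro a; apply functional_extensionality; intro b.
unfold pdy. apply is_derive_unique. unfold qd. auto_derive; auto. ring.
Qed.
Lemma qd_at c0 cx cy cxx cxy cyy x0 y0 : qd c0 cx cy cxx cxy cyy x0 y0 x0 y0 = c0.
Proof. unfold qd; ring. Qed.

Lemma qd_cont c0 cx cy cxx cxy cyy x0 y0 x y :
  continuity_2d_pt (fun a b => qd c0 cx cy cxx cxy cyy x0 y0 a b) x y.
Proof.
unfold qd. repeat first [apply continuity_2d_pt_id1 | apply continuity_2d_pt_id2 |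
  apply continuity_2d_pt_const | apply continuity_2d_pt_plus |
  apply continuity_2d_pt_minus | apply continuity_2d_pt_mult].
Qed.

Lemma C1r_qd O c0 cx cy cxx cxy cyy x0 y0 :
  C1r O (fun a b => qd c0 cx cy cxx cxy cyy x0 y0 a b).
Proof.
intros x y _. rewrite pdx_qd, pdy_qd. split; [|split; [|split]].
- unfold qd; auto_derive; auto.
- unfold qd; auto_derive; auto.
- apply qd_cont.
- apply qd_cont.
Qed.
Lemma C2r_qd O c0 cx cy cxx cxy cyy x0 y0 :
  C2r O (fun a b => qd c0 cx cy cxx cxy cyy x0 y0 a b).
Proof.
split; [apply C1r_qd|]. rewrite pdx_qd, pdy_qd. split; apply C1r_qd.
Qed.

Definition tw (c0 cx cy cxx cxy cyy d0 dx dy dxx dxy dyy x0 y0 : R) : R -> R -> alg :=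
  fun a b => (qd c0 cx cy cxx cxy cyy x0 y0 a b, qd d0 dx dy dxx dxy dyy x0 y0 a b).

Lemma tw_C2 O c0 cx cy cxx cxy cyy d0 dx dy dxx dxy dyy x0 y0 :
  C2on O (tw c0 cx cy cxx cxy cyy d0 dx dy dxx dxy dyy x0 y0).
Proof. split; apply C2r_qd. Qed.

Lemma tw_Dx c0 cx cy cxx cxy cyy d0 dx dy dxx dxy dyy x0 y0 :
  Dx (tw c0 cx cy cxx cxy cyy d0 dx dy dxx dxy dyy x0 y0) =
  tw cx (2*cxx) cxy 0 0 0 dx (2*dxx) dxy 0 0 0 x0 y0.
Proof.
apply functional_extensionality; intro a; apply functional_extensionality; intro b.
unfold Dx, tw; cbn [fst snd]. now rewrite !pdx_qd.
Qed.
Lemma tw_Dy c0 cx cy cxx cxy cyy d0 dx dy dxx dxy dyy x0 y0 :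
  Dy (tw c0 cx cy cxx cxy cyy d0 dx dy dxx dxy dyy x0 y0) =
  tw cy cxy (2*cyy) 0 0 0 dy dxy (2*dyy) 0 0 0 x0 y0.
Proof.
apply functional_extensionality; intro a; apply functional_extensionality; intro b.
unfold Dy, tw; cbn [fst snd]. now rewrite !pdy_qd.
Qed.
Lemma tw_at c0 cx cy cxx cxy cyy d0 dx dy dxx dxy dyy x0 y0 :
  tw c0 cx cy cxx cxy cyy d0 dx dy dxx dxy dyy x0 y0 x0 y0 = (c0, d0).
Proof. unfold tw. now rewrite !qd_at. Qed.

Lemma tw_holo al be O c0 cx cy cxx cxy cyy d0 dx dy dxx dxy dyy x0 y0 :
  cx = al * dy -> cxx = al * dxy / 2 -> cxy = 2 * al * dyy ->
  dx = be * dy - cy -> dxx = (be * dxy - cxy) / 2 -> cyy = (2 * be * dyy - dxy) / 2 ->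
  holo al be O (tw c0 cx cy cxx cxy cyy d0 dx dy dxx dxy dyy x0 y0).
Proof.
intros H1 H2 H3 H4 H5 H6 x y _. unfold dzb. rewrite tw_Dx, tw_Dy.
unfold tw, qd. subst. unfold cscal, cadd, cmul, cI; cbn [fst snd].
apply injective_projections; cbn [fst snd]; field.
Qed.

Lemma tw_exd c0 cx cy cxx cxy cyy d0 dx dy dxx dxy dyy x0 y0 x y :
  exd (tw c0 cx cy cxx cxy cyy d0 dx dy dxx dxy dyy x0 y0) x y.
Proof. unfold exd, tw; cbn [fst snd]; unfold qd; repeat split; auto_derive; auto. Qed.
Section TW.
Variables (al be c0 cx cy cxx cxy cyy d0 dx dy dxx dxy dyy x0 y0 : R).
Let w := tw c0 cx cy cxx cxy cyy d0 dx dy dxx dxy dyy x0 y0.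

Lemma tw_dz : dz al be w x0 y0 =
  cscal (1/2) (cadd (cx,dx) (cscal (-1) (cmul al be cI (cy,dy)))).
Proof. unfold dz, w. rewrite tw_Dx, tw_Dy, !tw_at. reflexivity. Qed.

Lemma tw_dzbcw : dzb al be (fun a b => cconj (w a b)) x0 y0 =
  cscal (1/2) (cadd (cconj (cx,dx)) (cmul al be cI (cconj (cy,dy)))).
Proof. rewrite dzb_conj. unfold w. rewrite tw_Dx, tw_Dy, !tw_at. reflexivity. Qed.

Lemma tw_dzbcu : dzb al be (fun a b => cconj (dz al be w a b)) x0 y0 =
  cscal (1/2) (cadd
   (cconj (cscal (1/2) (cadd (2*cxx,2*dxx) (cscal (-1) (cmul al be cI (cxy,dxy))))))
   (cmul al be cI (cconj (cscal (1/2) (cadd (cxy,dxy) (cscal (-1) (cmul al be cI (2*cyy,2*dyy)))))))).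
Proof.
rewrite dzb_conj. unfold w.
rewrite Dx_dz, Dy_dz; try (rewrite ?tw_Dx, ?tw_Dy; apply tw_exd).
repeat first [rewrite tw_Dx | rewrite tw_Dy]. rewrite !tw_at. reflexivity.
Qed.
End TW.
Lemma test_eq al be Om A B C D E F G
  c0 cx cy cxx cxy cyy d0 dx dy dxx dxy dyy x0 y0 :
  associated_dzb al be Om (Lop al be A B C D E F G) -> open2 Om -> Om x0 y0 ->
  C1on Om A -> C1on Om B -> C1on Om E -> C1on Om F -> C1on Om G ->
  cx = al * dy -> cxx = al * dxy / 2 -> cxy = 2 * al * dyy ->
  dx = be * dy - cy -> dxx = (be * dxy - cxy) / 2 -> cyy = (2 * be * dyy - dxy) / 2 ->
  cadd (cmul al be (dzb al be A x0 y0)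
          (cscal (1/2) (cadd (cx,dx) (cscal (-1) (cmul al be cI (cy,dy))))))
  (cadd (cmul al be (dzb al be B x0 y0)
          (cconj (cscal (1/2) (cadd (cx,dx) (cscal (-1) (cmul al be cI (cy,dy)))))))
  (cadd (cmul al be (B x0 y0) (cscal (1/2) (cadd
   (cconj (cscal (1/2) (cadd (2*cxx,2*dxx) (cscal (-1) (cmul al be cI (cxy,dxy))))))
   (cmul al be cI (cconj (cscal (1/2) (cadd (cxy,dxy) (cscal (-1) (cmul al be cI (2*cyy,2*dyy))))))))))
  (cadd (cmul al be (dzb al be E x0 y0) (c0,d0))
  (cadd (cmul al be (dzb al be F x0 y0) (cconj (c0,d0)))
  (cadd (cmul al be (F x0 y0)
     (cscal (1/2) (cadd (cconj (cx,dx)) (cmul al be cI (cconj (cy,dy))))))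
   (dzb al be G x0 y0)))))) = (0,0).
Proof.
intros Has HO H hA hB hE hF hG h1 h2 h3 h4 h5 h6.
assert (Hh := tw_holo al be Om c0 cx cy cxx cxy cyy d0 dx dy dxx dxy dyy x0 y0 h1 h2 h3 h4 h5 h6).
assert (HC := tw_C2 Om c0 cx cy cxx cxy cyy d0 dx dy dxx dxy dyy x0 y0).
assert (Hw := Has _ HC Hh x0 y0 H).
rewrite (KL al be Om A B C D E F G) in Hw by auto.
rewrite tw_dz, tw_dzbcu, tw_dzbcw, tw_at in Hw. exact Hw.
Qed.

Ltac hh := first [ring | field].

Theorem lemma1 (alpha beta : R) (Om : R -> R -> Prop)
  (A B C D E F G : R -> R -> alg) :
  alpha * beta ^ 2 - 4 * alpha ^ 2 <> 0 ->
  is_domain Om ->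
  C1on Om A -> C1on Om B -> C1on Om E -> C1on Om F -> C1on Om G ->
  (associated_dzb alpha beta Om (Lop alpha beta A B C D E F G) <->
   ((forall x y, Om x y -> B x y = (0, 0)) /\
    (forall x y, Om x y -> F x y = (0, 0)) /\
    holo alpha beta Om A /\ holo alpha beta Om E /\ holo alpha beta Om G)).
Proof.
intros Hab Hdom hA hB hE hF hG. destruct Hdom as (_&HO&_).
assert (Ha : alpha <> 0). { intro Z. apply Hab. rewrite Z. ring. }
split.
- intro Has.
  assert (T := fun c0 cx cy cxx cxy cyy d0 dx dy dxx dxy dyy x y H =>
    test_eq alpha beta Om A B C D E F G c0 cx cy cxx cxy cyy d0 dx dy dxx dxy dyy x y
      Has HO H hA hB hE hF hG).
  assert (HG : forall x y, Om x y -> dzb alpha beta G x y = (0,0)).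
  { intros x y H. rewrite <- (T 0 0 0 0 0 0 0 0 0 0 0 0 x y H); try hh. pe2. }
  assert (HEF : forall x y, Om x y -> dzb alpha beta E x y = (0,0) /\ dzb alpha beta F x y = (0,0)).
  { intros x y H.
    assert (T1 := T 1 0 0 0 0 0 0 0 0 0 0 0 x y H). 
    assert (T2 := T 0 0 0 0 0 0 1 0 0 0 0 0 x y H).
    rewrite (HG x y H) in T1, T2.
    assert (E1 : cadd (dzb alpha beta E x y) (dzb alpha beta F x y) = (0,0)).
    { rewrite <- T1; try hh. pe2. }
    assert (E2 : cadd (cmul alpha beta (dzb alpha beta E x y) cI)
                      (cscal (-1) (cmul alpha beta (dzb alpha beta F x y) cI)) = (0,0)).
    { rewrite <- T2; try hh. pe2. }
    destruct (dzb alpha beta E x y) as [e1 e2], (dzb alpha beta F x y) as [f1 f2].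
    unfold cadd, cmul, cscal, cI in E1, E2; cbn [fst snd] in E1, E2.
    injection E1 as E1a E1b. injection E2 as E2a E2b.
    assert (e2 - f2 = 0).
    { apply (Rmult_eq_reg_l alpha); auto. lra. }
    assert (e2 = 0) by lra. assert (f2 = 0) by lra.
    subst. assert (e1 = 0) by lra. assert (f1 = 0) by lra. subst. auto. }
  assert (HB : forall x y, Om x y -> B x y = (0,0)).
  { intros x y H.
    assert (TQ := T 0 0 0 (-alpha) 0 1 0 0 0 (-beta) (-2) 0 x y H).
    destruct (HEF x y H) as [HE HF].
    rewrite (HG x y H), HE, HF in TQ.
    assert (E1 : cscal (-2*alpha) (B x y) = (0,0)).
    { rewrite <- TQ; try hh. pe2. }
    destruct (B x y) as [b1 b2]. unfold cscal in E1; cbn [fst snd] in E1.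
    injection E1 as E1a E1b.
    assert (b1 = 0). { apply (Rmult_eq_reg_l (-2*alpha)). lra. intro; apply Ha; lra. }
    assert (b2 = 0). { apply (Rmult_eq_reg_l (-2*alpha)). lra. intro; apply Ha; lra. }
    subst; auto. }
  assert (HAF : forall x y, Om x y -> dzb alpha beta A x y = (0,0) /\ F x y = (0,0)).
  { intros x y H.
    assert (T1 := T 0 0 1 0 0 0 0 (-1) 0 0 0 0 x y H).
    assert (T2 := T 0 alpha 0 0 0 0 0 beta 1 0 0 0 x y H).
    destruct (HEF x y H) as [HE HF].
    assert (HdB := dzb_zero alpha beta Om B x y HO H HB).
    rewrite (HG x y H), HE, HF, HdB, (HB x y H) in T1, T2.
    assert (E1 : cmul alpha beta (cadd (F x y) (cscal (-1) (dzb alpha beta A x y))) cI = (0,0)).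
    { rewrite <- T1; try hh. pe2. }
    assert (E2 : cadd (cmul alpha beta (dzb alpha beta A x y) (alpha,beta))
                      (cmul alpha beta (F x y) (alpha,0)) = (0,0)).
    { rewrite <- T2; try hh. pe2. }
    destruct (dzb alpha beta A x y) as [a1 a2], (F x y) as [f1 f2].
    unfold cadd, cmul, cscal, cI in E1, E2; cbn [fst snd] in E1, E2.
    injection E1 as E1a E1b. injection E2 as E2a E2b.
    assert (f2 - a2 = 0).
    { apply (Rmult_eq_reg_l alpha); auto. lra. }
    assert (f1 = a1) by nra. assert (f2 = a2) by lra. subst f1 f2.
    assert (2 * a1 - beta * a2 = 0).
    { apply (Rmult_eq_reg_l alpha); auto. lra. }
    assert (a1 = beta * a2 / 2) by lra. subst a1.
    assert (K : a2 * (2 * alpha - beta ^ 2 / 2) = 0) by lra.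
    assert (a2 * (alpha * (4 * alpha - beta ^ 2)) = 0).
    { replace (a2 * (alpha * (4 * alpha - beta ^ 2))) with (2 * alpha * (a2 * (2 * alpha - beta ^ 2 / 2))) by field.
      rewrite K; ring. }
    assert (a2 = 0).
    { apply Rmult_integral in H2. destruct H2; auto.
      exfalso; apply Hab. lra. }
    subst a2. replace (beta * 0 / 2) with 0 by field. auto. }
  split; [exact HB|]. split; [intros x y H; apply (HAF x y H)|].
  split; [intros x y H; apply (HAF x y H)|].
  split; [intros x y H; apply (HEF x y H)|]. exact HG.
- intros (HB & HF & HA & HE & HG) w HC Hh x y H.
  rewrite (KL alpha beta Om A B C D E F G) by auto.
  rewrite (HA x y H), (HE x y H), (HG x y H), (HB x y H), (HF x y H).
  rewrite (dzb_zero alpha beta Om B x y HO H HB), (dzb_zero alpha beta Om F x y HO H HF).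
  pe2.
Qed.
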